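(* Let $\mathfrak g$ be a pre-Lie algebra, $r\in\mathrm{Sym}^2(\mathfrak g)$ an $\mathfrak s$-matrix, and $\kappa\in\mathrm{Sym}^2(\mathfrak g)$ such that $r+t\kappa$ is an $\mathfrak s$-matrix for all $t\in\mathbb K$. Define $\pi:\mathfrak g^*\otimes\mathfrak g^*\to\mathfrak g^*$ by $\pi(\alpha,\beta)=\mathrm{ad}^*_{\kappa^\sharp(\alpha)}\beta-R^*_{\kappa^\sharp(\beta)}\alpha$. Then $\pi$ generates a one-parameter infinitesimal deformation of the phase space $(\mathfrak g^c,\mathfrak g^{*c},\omega_p)$ associated to $r$ (where $\mathfrak g^*$ carries the pre-Lie product $\cdot_r$): for every $t\in\mathbb K$, $\alpha\ast_t\beta=\alpha\cdot_r\beta+t\pi(\alpha,\beta)$ is a pre-Lie product on $\mathfrak g^*$ and $(\mathfrak g^c,(\mathfrak g^*,\ast_t)^c,\omega_p)$ is a phase space of $\mathfrak g^c$.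
   Context: A pre-Lie algebra is a finite-dimensional vector space over a field $\mathbb K$ of characteristic $0$ with product $\cdot$ satisfying $(x\cdot y)\cdot z-x\cdot(y\cdot z)=(y\cdot x)\cdot z-y\cdot(x\cdot z)$; its sub-adjacent Lie bracket is the commutator, written $[x,y]_{\mathfrak g}$ on $\mathfrak g$, and $\mathfrak g^c$ denotes this Lie algebra. Define $\langle L^*_x\alpha,y\rangle=-\langle\alpha,x\cdot y\rangle$, $\langle R^*_x\alpha,y\rangle=-\langle\alpha,y\cdot x\rangle$, $\mathrm{ad}^*_x=L^*_x-R^*_x$. For $r\in\mathrm{Sym}^2(\mathfrak g)$, $\langle r^\sharp(\alpha),\beta\rangle=r(\alpha,\beta)$; for $r=\sum_ia_i\otimes b_i$, $[r,r]=-\sum a_i\cdot a_j\otimes b_i\otimes b_j+\sum a_i\otimes b_i\cdot a_j\otimes b_j+\sum a_i\otimes a_j\otimes[b_i,b_j]_{\mathfrak g}$; $r$ is an $\mathfrak s$-matrix if $[r,r]=0$. Set $\alpha\cdot_r\beta=\mathrm{ad}^*_{r^\sharp(\alpha)}\beta-R^*_{r^\sharp(\beta)}\alpha$ (a pre-Lie product on $\mathfrak g^*$ when $r$ is an $\mathfrak s$-matrix). Given a pre-Lie product $\ast$ on $\mathfrak g^*$, with commutator $[\alpha,\beta]_\ast=\alpha\ast\beta-\beta\ast\alpha$ and $L^*_\alpha:\mathfrak g\to\mathfrak g$ defined by $\langle L^*_\alpha x,\beta\rangle=-\langle x,\alpha\ast\beta\rangle$, we say $(\mathfrak g^c,(\mathfrak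 g^*,\ast)^c,\omega_p)$ is a phase space of $\mathfrak g^c$ if the bracket $[x+\alpha,y+\beta]_p=[\alpha,\beta]_\ast+L^*_x\beta-L^*_y\alpha+L^*_\alpha y-L^*_\beta x+[x,y]_{\mathfrak g}$ is a Lie bracket on $\mathfrak g\oplus\mathfrak g^*$ for which $\omega_p(x+\alpha,y+\beta)=\langle\alpha,y\rangle-\langle x,\beta\rangle$ is a $2$-cocycle, i.e. $\omega_p([u,v]_p,w)+\omega_p([v,w]_p,u)+\omega_p([w,u]_p,v)=0$. *)

(* Defs.v *)
From mathcomp Require Import all_boot all_order all_algebra.
Set Implicit Arguments. Unset Strict Implicit. Unset Printing Implicit Defensive.
Import GRing.Theory.
Local Open Scope ring_scope.

(* Conventions: the n-dimensional space g is modelled as 'rV[K]_n (coordinates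
   in a fixed basis e_0..e_{n-1}); its dual g^* is modelled as 'rV[K]_n too
   (coordinates in the dual basis), with the pairing <alpha, x> = sum_i alpha_i x_i.
   An element of Sym^2(g) is a symmetric n x n matrix r, r = sum_{i,j} r_ij e_i (x) e_j. *)

Section Defs.
Variables (K : fieldType) (n : nat).
Notation V := 'rV[K]_n.

Definition ev (j : 'I_n) : V := delta_mx 0 j.

Definition pair (alpha x : V) : K := \sum_i alpha 0 i * x 0 i.

Definition bilinear_op (W : lmodType K) (op : W -> W -> W) : Prop :=
  (forall (a : K) (x y z : W), op (a *: x + y) z = a *: op x z + op y z) /\
  (forall (a : K) (x y z : W), op z (a *: x + y) = a *: op z x + op z y).

Definition is_preLie (W : lmodType K) (op : W -> W -> W) : Prop :=
  bilinear_op op /\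
  forall x y z : W, op (op x y) z - op x (op y z) = op (op y x) z - op y (op x z).

Variable mul : V -> V -> V.

Definition brg (x y : V) : V := mul x y - mul y x.

Definition Lstar (x alpha : V) : V := \row_j (- pair alpha (mul x (ev j))).
Definition Rstar (x alpha : V) : V := \row_j (- pair alpha (mul (ev j) x)).
Definition adstar (x alpha : V) : V := Lstar x alpha - Rstar x alpha.

Definition sharp (r : 'M[K]_n) (alpha : V) : V := alpha *m r.

(* coefficient of x (x) y (x) z at the basis element e_p (x) e_q (x) e_s *)
Definition t3 (x y z : V) (p q s : 'I_n) : K := x 0 p * y 0 q * z 0 s.

(* [r,r] for r = sum_{(i,j)} a_{ij} (x) b_{ij} with a_{ij} = e_i, b_{ij} = r_ij e_j,
   given by its coefficient at e_p (x) e_q (x) e_s *)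
Definition rr (r : 'M[K]_n) (p q s : 'I_n) : K :=
  \sum_i \sum_j \sum_k \sum_l
    (let a1 := ev i in let b1 := r i j *: ev j in
     let a2 := ev k in let b2 := r k l *: ev l in
     - t3 (mul a1 a2) b1 b2 p q s
     + t3 a1 (mul b1 a2) b2 p q s
     + t3 a1 a2 (brg b1 b2) p q s).

Definition s_matrix (r : 'M[K]_n) : Prop := forall p q s, rr r p q s = 0.

Definition dot_r (r : 'M[K]_n) (alpha beta : V) : V :=
  adstar (sharp r alpha) beta - Rstar (sharp r beta) alpha.

Variable ast : V -> V -> V.

Definition dLstar (alpha x : V) : V := \row_j (- pair (ast alpha (ev j)) x).

Definition padd (u v : V * V) : V * V := (u.1 + v.1, u.2 + v.2).
Definition pscale (a : K) (u : V * V) : V * V := (a *: u.1, a *: u.2).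

Definition brp (u v : V * V) : V * V :=
  let: (x, alpha) := u in let: (y, beta) := v in
  (dLstar alpha y - dLstar beta x + brg x y,
   (ast alpha beta - ast beta alpha) + Lstar x beta - Lstar y alpha).

Definition omega_p (u v : V * V) : K := pair u.2 v.1 - pair v.2 u.1.

Definition is_Lie_bracket (b : V * V -> V * V -> V * V) : Prop :=
  (forall (a : K) u v w, b (padd (pscale a u) v) w = padd (pscale a (b u w)) (b v w)) /\
  (forall (a : K) u v w, b w (padd (pscale a u) v) = padd (pscale a (b w u)) (b w v)) /\
  (forall u, b u u = (0, 0)) /\
  (forall u v w, padd (b u (b v w)) (padd (b v (b w u)) (b w (b u v))) = (0, 0)).

Definition phase_space : Prop :=
  is_Lie_bracket brp /\
  forall u v w, omega_p (brp u v) w + omega_p (brp v w) u + omega_p (brp w u) v = 0.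

End Defs.

(* Main.v *)
Require Import Defs.
From mathcomp Require Import all_boot all_order all_algebra ring.
Import GRing.Theory.
Local Open Scope ring_scope.
Set Implicit Arguments. Unset Strict Implicit.

Lemma pairDl (K : fieldType) n (a b w : 'rV[K]_n) : pair (a + b) w = pair a w + pair b w.
Proof. rewrite /pair -big_split /=; apply: eq_bigr => i _; rewrite mxE; ring. Qed.
Lemma pairZl (K : fieldType) n c (a w : 'rV[K]_n) : pair (c *: a) w = c * pair a w.
Proof. rewrite /pair mulr_sumr; apply: eq_bigr => i _; rewrite mxE; ring. Qed.
Lemma pairC (K : fieldType) n (a w : 'rV[K]_n) : pair a w = pair w a.
Proof. rewrite /pair; apply: eq_bigr => i _; ring. Qed.
Lemma pairNl (K : fieldType) n (a w : 'rV[K]_n) : pair (- a) w = - pair a w.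
Proof. by rewrite -scaleN1r pairZl mulN1r. Qed.
Lemma pairBl (K : fieldType) n (a b w : 'rV[K]_n) : pair (a - b) w = pair a w - pair b w.
Proof. by rewrite pairDl pairNl. Qed.
Lemma pairDr (K : fieldType) n (a b w : 'rV[K]_n) : pair w (a + b) = pair w a + pair w b.
Proof. by rewrite !(pairC w) pairDl. Qed.
Lemma pairZr (K : fieldType) n c (a w : 'rV[K]_n) : pair w (c *: a) = c * pair w a.
Proof. by rewrite !(pairC w) pairZl. Qed.
Lemma pairNr (K : fieldType) n (a w : 'rV[K]_n) : pair w (- a) = - pair w a.
Proof. by rewrite !(pairC w) pairNl. Qed.
Lemma pairBr (K : fieldType) n (a b w : 'rV[K]_n) : pair w (a - b) = pair w a - pair w b.
Proof. by rewrite !(pairC w) pairBl. Qed.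
Lemma pair0r (K : fieldType) n (w : 'rV[K]_n) : pair w 0 = 0.
Proof. by rewrite /pair big1 // => i _; rewrite mxE mulr0. Qed.

Lemma pair_ev (K : fieldType) n (a : 'rV[K]_n) j : pair a (ev K j) = a 0 j.
Proof.
rewrite /pair (bigD1 j) //= big1 ?addr0.
  by rewrite /ev mxE !eqxx mulr1.
by move=> i /negbTE ij; rewrite /ev mxE ij andbF mulr0.
Qed.

Lemma pair_ext (K : fieldType) n (a b : 'rV[K]_n) : (forall w, pair a w = pair b w) -> a = b.
Proof.
move=> h; apply/rowP => j; rewrite -!(pair_ev _ j) (h (ev K j)) //.
Qed.

Lemma pair_row (K : fieldType) n (g : 'I_n -> K) (w : 'rV[K]_n) :
  pair (\row_j g j) w = \sum_j g j * w 0 j.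
Proof. by rewrite /pair; apply: eq_bigr => i _; rewrite mxE. Qed.

Lemma lin_expand (K : fieldType) n (f : 'rV[K]_n -> K) :
  (forall a u v, f (a *: u + v) = a * f u + f v) ->
  forall w, f w = \sum_j w 0 j * f (ev K j).
Proof.
move=> hf w.
have f0 : f 0 = 0.
  have := hf 1 0 0; rewrite scaler0 addr0 mul1r => /eqP.
  by rewrite -subr_eq0 opprD addrA subrr add0r oppr_eq0 => /eqP.
rewrite {1}(row_sum_delta w); elim/big_rec2: _ => [//|i y1 y2 _ <-].
by rewrite hf.
Qed.
Section X. End X.
Lemma bmulDl (K : fieldType) n (mul : 'rV[K]_n -> 'rV[K]_n -> 'rV[K]_n) :
  bilinear_op mul -> forall x y z, mul (x + y) z = mul x z + mul y z.
Proof. by move=> [h _] x y z; rewrite -{1}(scale1r x) h scale1r. Qed.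
Lemma bmulDr (K : fieldType) n (mul : 'rV[K]_n -> 'rV[K]_n -> 'rV[K]_n) :
  bilinear_op mul -> forall x y z, mul z (x + y) = mul z x + mul z y.
Proof. by move=> [_ h] x y z; rewrite -{1}(scale1r x) h scale1r. Qed.
Lemma bmul0l (K : fieldType) n (mul : 'rV[K]_n -> 'rV[K]_n -> 'rV[K]_n) :
  bilinear_op mul -> forall z, mul 0 z = 0.
Proof.
move=> hb z; have := bmulDl hb 0 0 z; rewrite addr0 => /eqP.
by rewrite -subr_eq0 opprD addrA subrr add0r oppr_eq0 => /eqP.
Qed.
Lemma bmul0r (K : fieldType) n (mul : 'rV[K]_n -> 'rV[K]_n -> 'rV[K]_n) :
  bilinear_op mul -> forall z, mul z 0 = 0.
Proof.
move=> hb z; have := bmulDr hb 0 0 z; rewrite addr0 => /eqP.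
by rewrite -subr_eq0 opprD addrA subrr add0r oppr_eq0 => /eqP.
Qed.
Lemma bmulZl (K : fieldType) n (mul : 'rV[K]_n -> 'rV[K]_n -> 'rV[K]_n) :
  bilinear_op mul -> forall a x z, mul (a *: x) z = a *: mul x z.
Proof. move=> hb a x z; have [h _] := hb; by rewrite -[a *: x]addr0 h bmul0l // addr0. Qed.
Lemma bmulZr (K : fieldType) n (mul : 'rV[K]_n -> 'rV[K]_n -> 'rV[K]_n) :
  bilinear_op mul -> forall a x z, mul z (a *: x) = a *: mul z x.
Proof. move=> hb a x z; have [_ h] := hb; by rewrite -[a *: x]addr0 h bmul0r // addr0. Qed.
Lemma bmulNl (K : fieldType) n (mul : 'rV[K]_n -> 'rV[K]_n -> 'rV[K]_n) :
  bilinear_op mul -> forall x z, mul (- x) z = - mul x z.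
Proof. by move=> hb x z; rewrite -scaleN1r bmulZl // scaleN1r. Qed.
Lemma bmulNr (K : fieldType) n (mul : 'rV[K]_n -> 'rV[K]_n -> 'rV[K]_n) :
  bilinear_op mul -> forall x z, mul z (- x) = - mul z x.
Proof. by move=> hb x z; rewrite -scaleN1r bmulZr // scaleN1r. Qed.
Lemma bmulBl (K : fieldType) n (mul : 'rV[K]_n -> 'rV[K]_n -> 'rV[K]_n) :
  bilinear_op mul -> forall x y z, mul (x - y) z = mul x z - mul y z.
Proof. by move=> hb x y z; rewrite bmulDl // bmulNl. Qed.
Lemma bmulBr (K : fieldType) n (mul : 'rV[K]_n -> 'rV[K]_n -> 'rV[K]_n) :
  bilinear_op mul -> forall x y z, mul z (x - y) = mul z x - mul z y.
Proof. by move=> hb x y z; rewrite bmulDr // bmulNr. Qed.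

Ltac pexp hb := rewrite ?(bmulDl hb, bmulDr hb, bmulBl hb, bmulBr hb, bmulNl hb, bmulNr hb,
   bmulZl hb, bmulZr hb, bmul0l hb, bmul0r hb, pairDl, pairDr, pairBl, pairBr, pairNl, pairNr,
   pairZl, pairZr, pair0r).

Lemma pLstar (K : fieldType) n (mul : 'rV[K]_n -> 'rV[K]_n -> 'rV[K]_n) :
  bilinear_op mul -> forall x a w, pair (Lstar mul x a) w = - pair a (mul x w).
Proof.
move=> hb x a w; rewrite pair_row (lin_expand (f := fun w => - pair a (mul x w))).
  by apply: eq_bigr => j _; rewrite mulrC.
by move=> c u v; pexp hb; ring.
Qed.
Lemma pRstar (K : fieldType) n (mul : 'rV[K]_n -> 'rV[K]_n -> 'rV[K]_n) :
  bilinear_op mul -> forall x a w, pair (Rstar mul x a) w = - pair a (mul w x).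
Proof.
move=> hb x a w; rewrite pair_row (lin_expand (f := fun w => - pair a (mul w x))).
  by apply: eq_bigr => j _; rewrite mulrC.
by move=> c u v; pexp hb; ring.
Qed.
Lemma pdL (K : fieldType) n (ast : 'rV[K]_n -> 'rV[K]_n -> 'rV[K]_n) :
  bilinear_op ast -> forall a x b, pair (dLstar ast a x) b = - pair (ast a b) x.
Proof.
move=> hb a x b; rewrite pair_row (lin_expand (f := fun b => - pair (ast a b) x)).
  by apply: eq_bigr => j _; rewrite mulrC.
by move=> c u v; pexp hb; ring.
Qed.

Lemma sharpD (K : fieldType) n (R : 'M[K]_n) a b : sharp R (a + b) = sharp R a + sharp R b.
Proof. by rewrite /sharp mulmxDl. Qed.
Lemma sharpZ (K : fieldType) n (R : 'M[K]_n) c a : sharp R (c *: a) = c *: sharp R a.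
Proof. by rewrite /sharp scalemxAl. Qed.
Lemma sharpN (K : fieldType) n (R : 'M[K]_n) a : sharp R (- a) = - sharp R a.
Proof. by rewrite /sharp mulNmx. Qed.
Lemma sharpB (K : fieldType) n (R : 'M[K]_n) a b : sharp R (a - b) = sharp R a - sharp R b.
Proof. by rewrite sharpD sharpN. Qed.
Lemma sharp0 (K : fieldType) n (R : 'M[K]_n) : sharp R 0 = 0.
Proof. by rewrite /sharp mul0mx. Qed.
Lemma sharpRD (K : fieldType) n (R S : 'M[K]_n) a : sharp (R + S) a = sharp R a + sharp S a.
Proof. by rewrite /sharp mulmxDr. Qed.
Lemma sharpRZ (K : fieldType) n (R : 'M[K]_n) c a : sharp (c *: R) a = c *: sharp R a.
Proof. by rewrite /sharp scalemxAr. Qed.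

Lemma pair_mx (K : fieldType) n (a b : 'rV[K]_n) : pair a b = (a *m b^T) 0 0.
Proof. by rewrite /pair mxE; apply: eq_bigr => i _; rewrite mxE. Qed.

Lemma psharp (K : fieldType) n (R : 'M[K]_n) : R^T = R ->
  forall a b, pair a (sharp R b) = pair b (sharp R a).
Proof.
by move=> hR a b; rewrite (pairC b) !pair_mx /sharp trmx_mul hR mulmxA.
Qed.

Lemma pdot (K : fieldType) n (mul : 'rV[K]_n -> 'rV[K]_n -> 'rV[K]_n) R :
  bilinear_op mul -> forall a b w, pair (dot_r mul R a b) w =
  - pair b (mul (sharp R a) w) + pair b (mul w (sharp R a)) + pair a (mul w (sharp R b)).
Proof. by move=> hb a b w; rewrite /dot_r /adstar !pairBl pLstar // !pRstar //; ring. Qed.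

Lemma bil_expand (K : fieldType) n (f : 'rV[K]_n -> 'rV[K]_n -> K) :
  (forall c u v w, f (c *: u + v) w = c * f u w + f v w) ->
  (forall c u v w, f w (c *: u + v) = c * f w u + f w v) ->
  forall u v, f u v = \sum_(i < n) \sum_(k < n) u 0 i * v 0 k * f (ev K i) (ev K k).
Proof.
move=> hl hr u v; rewrite (lin_expand (f := fun u => f u v)) //.
apply: eq_bigr => i _; rewrite (lin_expand (f := fun v => f (ev K i) v)) //.
by rewrite mulr_sumr; apply: eq_bigr => k _; ring.
Qed.

Lemma bil4 (K : fieldType) n (f : 'rV[K]_n -> 'rV[K]_n -> K) :
  (forall c u v w, f (c *: u + v) w = c * f u w + f v w) ->
  (forall c u v w, f w (c *: u + v) = c * f w u + f w v) ->
  forall a M b N, f (a *m M) (b *m N) =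
  \sum_(i < n) \sum_(k < n) \sum_(j < n) \sum_(l < n) a 0 j * M j i * (b 0 l * N l k) * f (ev K i) (ev K k).
Proof.
move=> hl hr a M b N; rewrite bil_expand //; apply: eq_bigr => i _; apply: eq_bigr => k _.
rewrite !mxE big_distrlr mulr_suml; apply: eq_bigr => j _.
by rewrite mulr_suml.
Qed.

Lemma trip (K : fieldType) n (a b c A B C : 'rV[K]_n) :
  pair a A * pair b B * pair c C =
  \sum_(p < n) \sum_(q < n) \sum_(s < n) a 0 p * b 0 q * c 0 s * (A 0 p * B 0 q * C 0 s).
Proof.
rewrite /pair big_distrlr mulr_suml; apply: eq_bigr => p _.
rewrite mulr_suml; apply: eq_bigr => q _; rewrite mulr_sumr; apply: eq_bigr => s _; rewrite /=; ring.
Qed.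

Lemma Ev_sum (K : fieldType) n (c : 'I_n -> 'I_n -> 'I_n -> K) (H : 'I_n -> 'I_n -> 'I_n -> 'I_n -> K) :
 \sum_(p < n) \sum_(q < n) \sum_(s < n) c p q s * (\sum_(i < n) H i p q s) =
 \sum_(i < n) \sum_(p < n) \sum_(q < n) \sum_(s < n) c p q s * H i p q s.
Proof.
under eq_bigr => p _ do under eq_bigr => q _ do under eq_bigr => s _ do rewrite mulr_sumr.
under eq_bigr => p _ do under eq_bigr => q _ do rewrite exchange_big.
under eq_bigr => p _ do rewrite exchange_big.
by rewrite exchange_big.
Qed.

Lemma Ev3 (K : fieldType) n (a b c A B C D E F G H I : 'rV[K]_n) :
 \sum_(p < n) \sum_(q < n) \sum_(s < n) a 0 p * b 0 q * c 0 s *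
   (- t3 A B C p q s + t3 D E F p q s + t3 G H I p q s) =
 - (pair a A * pair b B * pair c C) + pair a D * pair b E * pair c F + pair a G * pair b H * pair c I.
Proof.
rewrite !trip -sumrN -!big_split; apply: eq_bigr => p _.
rewrite -sumrN -!big_split; apply: eq_bigr => q _.
rewrite -sumrN -!big_split; apply: eq_bigr => s _.
by rewrite /t3 /=; ring.
Qed.

Lemma rr_eval (K : fieldType) n (mul : 'rV[K]_n -> 'rV[K]_n -> 'rV[K]_n) (R : 'M[K]_n) (a b c : 'rV[K]_n) :
  \sum_(p < n) \sum_(q < n) \sum_(s < n) a 0 p * b 0 q * c 0 s * rr mul R p q s =
  \sum_(i < n) \sum_(j < n) \sum_(k < n) \sum_(l < n)
   (- (pair a (mul (ev K i) (ev K k)) * pair b (R i j *: ev K j) * pair c (R k l *: ev K l))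
    + pair a (ev K i) * pair b (mul (R i j *: ev K j) (ev K k)) * pair c (R k l *: ev K l)
    + pair a (ev K i) * pair b (ev K k) * pair c (brg mul (R i j *: ev K j) (R k l *: ev K l))).
Proof.
rewrite /rr Ev_sum; apply: eq_bigr => i _.
rewrite Ev_sum; apply: eq_bigr => j _.
rewrite Ev_sum; apply: eq_bigr => k _.
rewrite Ev_sum; apply: eq_bigr => l _.
by rewrite Ev3.
Qed.

Lemma T1 (K : fieldType) n (mul : 'rV[K]_n -> 'rV[K]_n -> 'rV[K]_n) (R : 'M[K]_n) (a b c : 'rV[K]_n) :
  bilinear_op mul -> R^T = R ->
  pair a (mul (b *m R) (c *m R)) =
  \sum_(i < n) \sum_(j < n) \sum_(k < n) \sum_(l < n)
     pair a (mul (ev K i) (ev K k)) * (R i j * b 0 j) * (R k l * c 0 l).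
Proof.
move=> hb hR; have hRs : forall i j, R i j = R j i by move=> i j; rewrite -{1}hR mxE.
rewrite (bil4 (f := fun u v => pair a (mul u v))); first last.
- by move=> ? ? ? ?; pexp hb; ring.
- by move=> ? ? ? ?; pexp hb; ring.
under eq_bigr => X _ do rewrite exchange_big.
apply: eq_bigr => i _; apply: eq_bigr => j _; apply: eq_bigr => k _; apply: eq_bigr => l _.
rewrite (hRs j i) (hRs l k); ring.
Qed.

Lemma T2 (K : fieldType) n (mul : 'rV[K]_n -> 'rV[K]_n -> 'rV[K]_n) (R : 'M[K]_n) (a b c : 'rV[K]_n) :
  bilinear_op mul -> R^T = R ->
  pair b (mul (a *m R) (c *m R)) =
  \sum_(i < n) \sum_(j < n) \sum_(k < n) \sum_(l < n)
     a 0 i * R i j * pair b (mul (ev K j) (ev K k)) * (R k l * c 0 l).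
Proof.
move=> hb hR; have hRs : forall i j, R i j = R j i by move=> i j; rewrite -{1}hR mxE.
rewrite (bil4 (f := fun u v => pair b (mul u v))); first last.
- by move=> ? ? ? ?; pexp hb; ring.
- by move=> ? ? ? ?; pexp hb; ring.
under eq_bigr => X _ do rewrite exchange_big.
rewrite exchange_big.
apply: eq_bigr => i _; apply: eq_bigr => j _; apply: eq_bigr => k _; apply: eq_bigr => l _.
rewrite (hRs l k); ring.
Qed.

Lemma T3 (K : fieldType) n (mul : 'rV[K]_n -> 'rV[K]_n -> 'rV[K]_n) (R : 'M[K]_n) (a b c : 'rV[K]_n) :
  bilinear_op mul -> R^T = R ->
  pair c (brg mul (a *m R) (b *m R)) =
  \sum_(i < n) \sum_(j < n) \sum_(k < n) \sum_(l < n)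
     a 0 i * R i j * (b 0 k * R k l) * pair c (brg mul (ev K j) (ev K l)).
Proof.
move=> hb hR.
rewrite (bil4 (f := fun u v => pair c (brg mul u v))); first last.
- by move=> ? ? ? ?; rewrite /brg; pexp hb; ring.
- by move=> ? ? ? ?; rewrite /brg; pexp hb; ring.
under eq_bigr => X _ do rewrite exchange_big.
under eq_bigr => X _ do under eq_bigr => Z _ do rewrite exchange_big.
rewrite exchange_big.
apply: eq_bigr => i _; apply: eq_bigr => j _; apply: eq_bigr => k _; apply: eq_bigr => l _.
ring.
Qed.

Lemma S_pair (K : fieldType) n (mul : 'rV[K]_n -> 'rV[K]_n -> 'rV[K]_n) (R : 'M[K]_n) :
  bilinear_op mul -> R^T = R -> s_matrix mul R -> forall a b c,
  pair c (mul (sharp R a) (sharp R b)) - pair c (mul (sharp R b) (sharp R a)) =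
  pair a (mul (sharp R b) (sharp R c)) - pair b (mul (sharp R a) (sharp R c)).
Proof.
move=> hb hR hS a b c.
have E : \sum_(p < n) \sum_(q < n) \sum_(s < n) a 0 p * b 0 q * c 0 s * rr mul R p q s = 0.
  by rewrite big1 // => p _; rewrite big1 // => q _; rewrite big1 // => s _; rewrite hS mulr0.
rewrite rr_eval in E.
have -> : pair c (mul (sharp R a) (sharp R b)) - pair c (mul (sharp R b) (sharp R a)) =
   pair c (brg mul (a *m R) (b *m R)) by rewrite /brg pairBr.
rewrite /sharp (T1 a b c hb hR) (T2 a b c hb hR) (T3 a b c hb hR).
apply/eqP; rewrite -subr_eq0; apply/eqP; rewrite -[RHS]E.
rewrite -!sumrB; apply: eq_bigr => i _.
rewrite -!sumrB; apply: eq_bigr => j _.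
rewrite -!sumrB; apply: eq_bigr => k _.
rewrite -!sumrB; apply: eq_bigr => l _.
rewrite /brg; pexp hb; rewrite !pair_ev; ring.
Qed.

Ltac pexp0 := rewrite ?(pairDl, pairDr, pairBl, pairBr, pairNl, pairNr, pairZl, pairZr, pair0r).
Lemma pair0l (K : fieldType) n (w : 'rV[K]_n) : pair 0 w = 0.
Proof. by rewrite pairC pair0r. Qed.

Lemma psharpl (K : fieldType) n (R : 'M[K]_n) : R^T = R ->
  forall v g, pair (sharp R v) g = pair v (sharp R g).
Proof. by move=> hR v g; rewrite pairC psharp. Qed.

Lemma PL (K : fieldType) n (mul : 'rV[K]_n -> 'rV[K]_n -> 'rV[K]_n) :
  is_preLie mul -> forall x y z,
  mul (mul x y) z = mul x (mul y z) + mul (mul y x) z - mul y (mul x z).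
Proof.
move=> [_ hp] x y z.
by rewrite -(subrK (mul x (mul y z)) (mul (mul x y) z)) hp addrC addrA.
Qed.

Ltac lsolve H := move/eqP: H; rewrite subr_eq => /eqP H; rewrite H.

Lemma hom (K : fieldType) n (mul : 'rV[K]_n -> 'rV[K]_n -> 'rV[K]_n) (R : 'M[K]_n) :
  bilinear_op mul -> R^T = R -> s_matrix mul R -> forall a b,
  sharp R (dot_r mul R a b) = mul (sharp R a) (sharp R b).
Proof.
move=> hb hR hS a b; apply: pair_ext => w.
rewrite psharpl // pdot // (pairC _ w).
have S1 := S_pair hb hR hS a b w.
have S2 := S_pair hb hR hS b w a.
lsolve S1; lsolve S2; ring.
Qed.

Lemma dot_bil (K : fieldType) n (mul : 'rV[K]_n -> 'rV[K]_n -> 'rV[K]_n) (R : 'M[K]_n) :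
  bilinear_op mul -> bilinear_op (dot_r mul R).
Proof.
move=> hb; split => a x y z; apply: pair_ext => w;
  rewrite [LHS]pdot // [RHS]pairDl pairZl !pdot // ?sharpD ?sharpZ; pexp hb; ring.
Qed.

Lemma dot_comm (K : fieldType) n (mul : 'rV[K]_n -> 'rV[K]_n -> 'rV[K]_n) (R : 'M[K]_n) :
  bilinear_op mul -> forall a b,
  dot_r mul R a b - dot_r mul R b a = Lstar mul (sharp R a) b - Lstar mul (sharp R b) a.
Proof.
move=> hb a b; apply: pair_ext => w; rewrite [LHS]pairBl [RHS]pairBl !pdot // !pLstar //; ring.
Qed.

Lemma dot_preLie (K : fieldType) n (mul : 'rV[K]_n -> 'rV[K]_n -> 'rV[K]_n) (R : 'M[K]_n) :
  is_preLie mul -> R^T = R -> s_matrix mul R -> is_preLie (dot_r mul R).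
Proof.
move=> hp hR hS; have hb := hp.1; split; first exact: dot_bil.
move=> a b c; apply: pair_ext => w.
rewrite [LHS]pairBl [RHS]pairBl !pdot // !hom //.
set x := sharp R a; set y := sharp R b; set z := sharp R c.
rewrite (PL hp x y w) (PL hp x w y) (PL hp y w x) (PL hp w y z) (PL hp w x z).
pexp hb; ring.
Qed.

Definition Psi (K : fieldType) n (R : 'M[K]_n) (u : 'rV[K]_n * 'rV[K]_n) :=
  (u.1 + sharp R u.2, u.2).
Definition Psinv (K : fieldType) n (R : 'M[K]_n) (u : 'rV[K]_n * 'rV[K]_n) :=
  (u.1 - sharp R u.2, u.2).
Definition br0 (K : fieldType) n (mul : 'rV[K]_n -> 'rV[K]_n -> 'rV[K]_n) (u v : 'rV[K]_n * 'rV[K]_n) :=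
  (brg mul u.1 v.1, Lstar mul u.1 v.2 - Lstar mul v.1 u.2).

Ltac vec := apply: pair_ext => ?; pexp0; ring.

Lemma brpE (K : fieldType) n (mul : 'rV[K]_n -> 'rV[K]_n -> 'rV[K]_n) (R : 'M[K]_n) ast :
  bilinear_op mul -> R^T = R -> s_matrix mul R -> (forall a b, ast a b = dot_r mul R a b) ->
  forall u v, brp mul ast u v = Psinv R (br0 mul (Psi R u) (Psi R v)).
Proof.
move=> hb hR hS hast [X a] [Y b]; rewrite /brp /Psinv /br0 /Psi /=.
have hab : bilinear_op ast.
  have [h1 h2] := dot_bil R hb.
  by split=> *; rewrite !hast ?h1 ?h2.
congr (_, _); apply: pair_ext => c.
- rewrite [LHS]pairDl [in LHS]pairBl !pdL // !hast !pdot // [in RHS]pairBl psharpl // !pairBl !pLstar //.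
  rewrite /brg ?sharpD; pexp hb.
  have S1 := S_pair hb hR hS a b c.
  rewrite !(pairC _ c). lsolve S1; ring.
- rewrite !hast dot_comm //; pexp0; rewrite !pLstar //; pexp hb; ring.
Qed.

Lemma PsiK (K : fieldType) n (R : 'M[K]_n) u : Psi R (Psinv R u) = u.
Proof. by case: u => x a; rewrite /Psi /Psinv /= subrK. Qed.

Lemma Psi_lin (K : fieldType) n (R : 'M[K]_n) c u v :
  Psi R (padd (pscale c u) v) = padd (pscale c (Psi R u)) (Psi R v).
Proof.
case: u => x a; case: v => y b; rewrite /Psi /padd /pscale /=; congr (_, _).
rewrite sharpD sharpZ; vec.
Qed.

Lemma Psinv_lin (K : fieldType) n (R : 'M[K]_n) c u v :
  Psinv R (padd (pscale c u) v) = padd (pscale c (Psinv R u)) (Psinv R v).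
Proof.
case: u => x a; case: v => y b; rewrite /Psinv /padd /pscale /=; congr (_, _).
rewrite sharpD sharpZ; vec.
Qed.

Lemma Psinv_add (K : fieldType) n (R : 'M[K]_n) u v :
  Psinv R (padd u v) = padd (Psinv R u) (Psinv R v).
Proof.
case: u => x a; case: v => y b; rewrite /Psinv /padd /=; congr (_, _).
rewrite sharpD; vec.
Qed.

Lemma br0_linl (K : fieldType) n (mul : 'rV[K]_n -> 'rV[K]_n -> 'rV[K]_n) :
  bilinear_op mul -> forall c u v w,
  br0 mul (padd (pscale c u) v) w = padd (pscale c (br0 mul u w)) (br0 mul v w).
Proof.
move=> hb c [x a] [y b] [z g]; rewrite /br0 /padd /pscale /brg /=; congr (_, _);
  apply: pair_ext => p; pexp hb; rewrite ?pLstar //; pexp hb; ring.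
Qed.

Lemma br0_linr (K : fieldType) n (mul : 'rV[K]_n -> 'rV[K]_n -> 'rV[K]_n) :
  bilinear_op mul -> forall c u v w,
  br0 mul w (padd (pscale c u) v) = padd (pscale c (br0 mul w u)) (br0 mul w v).
Proof.
move=> hb c [x a] [y b] [z g]; rewrite /br0 /padd /pscale /brg /=; congr (_, _);
  apply: pair_ext => p; pexp hb; rewrite ?pLstar //; pexp hb; ring.
Qed.

Lemma br0_jacobi (K : fieldType) n (mul : 'rV[K]_n -> 'rV[K]_n -> 'rV[K]_n) :
  is_preLie mul -> forall u v w,
  padd (br0 mul u (br0 mul v w)) (padd (br0 mul v (br0 mul w u)) (br0 mul w (br0 mul u v))) = (0, 0).
Proof.
move=> hp; have hb := hp.1; move=> [x a] [y b] [z g]; rewrite /br0 /padd /brg /=; congr (_, _);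
  apply: pair_ext => p; rewrite pair0l.
- rewrite !(pairC _ p); pexp hb.
  rewrite (PL hp x y z) (PL hp y z x) (PL hp z x y); pexp hb; ring.
- pexp hb; rewrite !pLstar //; pexp hb; rewrite !pLstar //; pexp hb.
  rewrite (PL hp x y p) (PL hp y z p) (PL hp z x p); pexp hb; ring.
Qed.

Lemma br0_cocycle (K : fieldType) n (mul : 'rV[K]_n -> 'rV[K]_n -> 'rV[K]_n) :
  bilinear_op mul -> forall u v w,
  omega_p (br0 mul u v) w + omega_p (br0 mul v w) u + omega_p (br0 mul w u) v = 0.
Proof.
move=> hb [x a] [y b] [z g]; rewrite /omega_p /br0 /brg /=.
pexp hb; rewrite !pLstar //; rewrite !(pairC _ (mul _ _)); ring.
Qed.

Lemma omega_Psinv (K : fieldType) n (R : 'M[K]_n) : R^T = R -> forall a w,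
  omega_p (Psinv R a) w = omega_p a (Psi R w).
Proof.
move=> hR [A g] [Z c]; rewrite /omega_p /Psinv /Psi /=; pexp0; rewrite (psharp hR c g); ring.
Qed.

Lemma main_phase (K : fieldType) n (mul : 'rV[K]_n -> 'rV[K]_n -> 'rV[K]_n) (R : 'M[K]_n) ast :
  is_preLie mul -> R^T = R -> s_matrix mul R -> (forall a b, ast a b = dot_r mul R a b) ->
  phase_space mul ast.
Proof.
move=> hp hR hS hast; have hb := hp.1.
have E := brpE hb hR hS hast.
split; [split; [|split; [|split]]|].
- by move=> c u v w; rewrite !E Psi_lin br0_linl // Psinv_lin.
- by move=> c u v w; rewrite !E Psi_lin br0_linr // Psinv_lin.
- case=> x a; rewrite /brp /brg !subrr; congr (_, _); rewrite ?subrr ?add0r ?addr0 ?subrr //.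
- move=> u v w; rewrite !E !PsiK -!Psinv_add br0_jacobi //.
  by rewrite /Psinv /= sharp0 subrr.
- move=> u v w; rewrite !E !omega_Psinv //; exact: br0_cocycle.
Qed.

Unset Implicit Arguments.
Theorem proposition5p8 (K : fieldType) (n : nat)
    (mul : 'rV[K]_n -> 'rV[K]_n -> 'rV[K]_n) (r kappa : 'M[K]_n) :
  [pchar K] =i pred0 ->
  is_preLie mul ->
  r^T = r -> kappa^T = kappa ->
  s_matrix mul r ->
  (forall t : K, s_matrix mul (r + t *: kappa)) ->
  let pi := fun alpha beta : 'rV[K]_n =>
    adstar mul (sharp kappa alpha) beta - Rstar mul (sharp kappa beta) alpha in
  forall t : K,
    let ast := fun alpha beta : 'rV[K]_n => dot_r mul r alpha beta + t *: pi alpha beta in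
    is_preLie ast /\ phase_space mul ast.
Proof.
move=> _ hp hr hk _ hst pi t ast.
have hb := hp.1.
set R := r + t *: kappa.
have hR : R^T = R by rewrite /R linearD linearZ /= hr hk.
have hS := hst t.
have hast : forall a b, ast a b = dot_r mul R a b.
  move=> a b; apply: pair_ext => w; rewrite /ast /pi.
  have -> : adstar mul (sharp kappa a) b - Rstar mul (sharp kappa b) a = dot_r mul kappa a b by [].
  rewrite [LHS]pairDl pairZl !pdot // /R !sharpRD !sharpRZ; pexp hb; ring.
split; last exact: main_phase hp hR hS hast.
have [h1 h2] := dot_preLie hp hR hS.
split; first split.
- by move=> *; rewrite !hast h1.1.
- by move=> *; rewrite !hast h1.2.
- by move=> *; rewrite !hast.
Qed.
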